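(* Let $f$ be a non-increasing real function on the battery energy states. If $0\le u_1\le u_2\le\epsilon_0$, then $$\sum_{\epsilon_1}p(\epsilon_1|\epsilon_0,u_1)f(\epsilon_1)\le\sum_{\epsilon_2}p(\epsilon_2|\epsilon_0,u_2)f(\epsilon_2),$$ where $p(\epsilon'|\epsilon_0,u)=\Pr\{Q(\epsilon_0-u+E_H)=\epsilon'\}$ is the probability that the battery is in energy state $\epsilon'$ in the next block given current energy $\epsilon_0$ and harvested energy $u$ consumed in the current block.
   Context: Parameters $B_m>0$ and a positive integer $M$. Battery energy states are $\{(2m-1)B_m/(2M): m=1,\dots,M\}$, and the quantizer is $Q(\varepsilon)=\big(2\min\{\lfloor M\min\{\varepsilon,B_m\}/B_m\rfloor+1,M\}-1\big)B_m/(2M)$ for $\varepsilon\ge0$. $E_H$ is a random variable with density $f_{E_H}$ on $[0,E_m]$, $E_m>0$. $\epsilon_0$ is a battery energy state. *)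

(* Defs.v *)
From HB Require Import structures.
From mathcomp Require Import all_boot all_order all_algebra.
From mathcomp Require Import all_classical all_reals all_analysis.
Set Implicit Arguments. Unset Strict Implicit. Unset Printing Implicit Defensive.
Import Order.TTheory GRing.Theory Num.Theory.
Local Open Scope classical_set_scope.
Local Open Scope ring_scope.

(* Battery energy states, 0-based index m : 'I_M gives (2(m+1)-1) Bm/(2M). *)
Definition bstate {R : realType} (Bm : R) (M : nat) (m : nat) : R :=
  ((2 * m + 1)%:R * Bm) / (2 * M%:R).

Definition quant {R : realType} (Bm : R) (M : nat) (eps : R) : R :=
  let k : R := Num.min ((Num.floor (M%:R * Num.min eps Bm / Bm))%:~R + 1) M%:R in
  ((2 * k - 1) * Bm) / (2 * M%:R).

Definition ptrans {R : realType} {d} {T : measurableType d}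
  (P : probability T R) (EH : T -> R) (Bm : R) (M : nat) (eps0 u eps' : R) : R :=
  fine (P [set x | quant Bm M (eps0 - u + EH x) = eps']).

(* Main.v *)
Require Import Defs.
From HB Require Import structures.
From mathcomp Require Import all_boot all_order all_algebra.
From mathcomp Require Import all_classical all_reals all_analysis.
From mathcomp Require Import ring lra zify measurable_realfun.
Import Order.TTheory GRing.Theory Num.Theory.
Local Open Scope classical_set_scope.
Local Open Scope ring_scope.

Lemma quant_mono (R : realType) (Bm : R) (M : nat) (x y : R) :
  0 < Bm -> x <= y -> quant Bm M x <= quant Bm M y.
Proof.
move=> hB hxy; rewrite /quant.
apply: ler_wpM2r; first by rewrite invr_ge0 mulr_ge0 // ler0n.
apply: ler_wpM2r; first exact: ltW.
apply: lerB => //; apply: ler_wpM2l => //.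
apply: le_min2 => //; rewrite lerD2r ler_int; apply: le_floor.
apply: ler_wpM2r; first by rewrite invr_ge0 ltW.
apply: ler_wpM2l; first exact: ler0n.
exact: le_min2.
Qed.

Lemma quant_state (R : realType) (Bm : R) (M : nat) (x : R) :
  0 < Bm -> (0 < M)%N -> 0 <= x -> exists n : 'I_M, quant Bm M x = bstate Bm M n.
Proof.
move=> hB hM hx; rewrite /quant.
have : 0 <= Num.floor (M%:R * Num.min x Bm / Bm).
  rewrite floor_ge0; apply: divr_ge0; last exact: ltW.
  by apply: mulr_ge0; [exact: ler0n|rewrite le_min hx ltW].
case: (Num.floor _) => [k|k] // _.
have -> : (Posz k)%:~R + 1 = k.+1%:R :> R by rewrite -natr1.
case: (leqP k.+1 M) => hk.
- have hk' : (k < M)%N by [].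
  exists (Ordinal hk'); rewrite /bstate /=.
  rewrite min_l ?ler_nat //; congr (_ / _); congr (_ * _).
  rewrite natrD natrM -addn1 natrD; ring.
- have hk' : (M.-1 < M)%N by rewrite prednK.
  exists (Ordinal hk'); rewrite /bstate /=.
  rewrite min_r; last by rewrite ler_nat ltnW.
  congr (_ / _); congr (_ * _).
  rewrite natrD natrM -{1}(prednK hM) -addn1 natrD; ring.
Qed.

Lemma bstate_inj (R : realType) (Bm : R) (M : nat) (i j : nat) :
  0 < Bm -> (0 < M)%N -> bstate Bm M i = bstate Bm M j -> i = j.
Proof.
move=> hB hM; rewrite /bstate => /(mulIf _) h.
have h2 : 2 * M%:R != 0 :> R by rewrite mulf_neq0 // ?pnatr_eq0 // -lt0n.
move: (h (invr_neq0 h2)) => /(mulIf (lt0r_neq0 hB)) /eqP.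
rewrite eqr_nat => /eqP; lia.
Qed.

Theorem lemma2 (R : realType) (Bm Em : R) (M : nat)
  (d : measure_display) (T : measurableType d) (P : probability T R)
  (EH : {RV P >-> R}) (fEH : R -> R)
  (hBm : 0 < Bm) (hM : (0 < M)%N) (hEm : 0 < Em)
  (hfEH_ge0 : forall x, 0 <= fEH x)
  (hfEH_meas : measurable_fun setT fEH)
  (hdens : forall A : set R, measurable A ->
     P (EH @^-1` A) = (\int[lebesgue_measure]_(x in A `&` [set y : R | (0 <= y <= Em)%R]) (fEH x)%:E)%E)
  (f : R -> R)
  (hf : forall m n : 'I_M, bstate Bm M m <= bstate Bm M n ->
          f (bstate Bm M n) <= f (bstate Bm M m))
  (m0 : 'I_M) (u1 u2 : R)
  (hu : 0 <= u1) (hu12 : u1 <= u2) (hu2 : u2 <= bstate Bm M m0) :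
  \sum_(m < M) ptrans P EH Bm M (bstate Bm M m0) u1 (bstate Bm M m) * f (bstate Bm M m)
  <= \sum_(m < M) ptrans P EH Bm M (bstate Bm M m0) u2 (bstate Bm M m) * f (bstate Bm M m).
Proof.
set s0 := bstate Bm M m0.
pose A u (m : nat) := [set x | quant Bm M (s0 - u + EH x) = bstate Bm M m].
have mA : forall u m, measurable (A u m).
  move=> u m.
  have hg : measurable_fun setT (fun e => quant Bm M (s0 - u + e)).
    apply: nondecreasing_measurable => // a b ab.
    by apply: quant_mono => //; rewrite lerD2l.
  have := measurableT_comp hg (measurable_funP EH) measurableT (measurable_set1 (bstate Bm M m)).
  by rewrite setTI.
pose N := EH @^-1` `]-oo, 0[.
have mN : measurable N by apply: measurable_funPTI.
have PN : P N = 0%E.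
  rewrite /N hdens //.
  have -> : `]-oo, 0[ `&` [set y : R | (0 <= y <= Em)%R] = set0.
    apply/seteqP; split => y //= [].
    by rewrite in_itv /= => hy /andP[hy0 _]; lra.
  exact: integral_set0.
have decomp : forall u B, u <= s0 -> measurable B ->
    P B = (\sum_(n < M) P (B `&` A u n))%E.
  move=> u B hu0 mB.
  pose U := \big[setU/set0]_(n < M) A u n.
  have mU : measurable U by apply: bigsetU_measurable => n _.
  rewrite (measureDI P mB mU).
  rewrite (@subset_measure0 _ _ _ P (B `\` U) N _ mN _ PN); first last.
  - move=> x [Bx nU]; rewrite /N /= in_itv /= ltNge; apply/negP => h; apply: nU.
    have [n hn] := @quant_state R Bm M (s0 - u + EH x) hBm hM ltac:(lra).
    by rewrite /U -bigcup_mkord; exists n => //; exact: ltn_ord.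
  - exact: measurableD.
  rewrite add0e /U -bigcup_mkord setI_bigcupr bigcup_mkord.
  rewrite measure_bigsetU_ord //.
  - by move=> i; apply: measurableI.
  - move=> i j _ _ [x [[_ hi] [_ hj]]].
    by apply: val_inj; apply: (@bstate_inj R Bm M _ _ hBm hM); rewrite -hi -hj.
pose a (m n : 'I_M) := fine (P (A u1 m `&` A u2 n)).
have hu1 : u1 <= s0 by apply: le_trans hu12 hu2.
have h1 : forall m : 'I_M, ptrans P EH Bm M s0 u1 (bstate Bm M m) = \sum_(n < M) a m n.
  move=> m; rewrite /ptrans; change (fine (P (A u1 m)) = \sum_(n < M) a m n).
  rewrite (decomp u2 _ hu2 (mA u1 m)).
  rewrite (eq_bigr (fun n => (a m n)%:E)); last first.
    by move=> n _; rewrite /a fineK // fin_num_measure //; exact: measurableI.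
  by rewrite sumEFin.
have h2 : forall n : 'I_M, ptrans P EH Bm M s0 u2 (bstate Bm M n) = \sum_(m < M) a m n.
  move=> n; rewrite /ptrans; change (fine (P (A u2 n)) = \sum_(m < M) a m n).
  rewrite (decomp u1 _ hu1 (mA u2 n)).
  rewrite (eq_bigr (fun m => (a m n)%:E)); last first.
    by move=> m _; rewrite /a setIC fineK // fin_num_measure //; exact: measurableI.
  by rewrite sumEFin.
have hle : forall m n : 'I_M, a m n * f (bstate Bm M m) <= a m n * f (bstate Bm M n).
  move=> m n; have [E|NE] := eqVneq (A u1 m `&` A u2 n) set0.
    by rewrite /a E measure0 /= !mul0r.
  apply: ler_wpM2l; first by rewrite /a fine_ge0 // measure_ge0.
  move/set0P: NE => [x [h1x h2x]]; apply: hf.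
  rewrite -h1x -h2x; apply: quant_mono => //.
  by rewrite lerD2r lerD2l lerN2.
under eq_bigr => m _ do rewrite h1 mulr_suml.
apply: le_trans.
  apply: ler_sum => m _; apply: ler_sum => n _; exact: hle m n.
rewrite exchange_big /= le_eqVlt; apply/orP; left; apply/eqP; apply: eq_bigr => n _.
by rewrite h2 mulr_suml.
Qed.
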